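(* Let $X$ and $Y$ be real Banach spaces with $Y$ reflexive. Let $F\colon X\to Y$ be a continuous function and let $L>0$. For each $y^*\in Y^*$ define $\phi_{y^*}\colon X\to\mathbb{R}$ by $\phi_{y^*}(x)=y^*(F(x))$. Suppose that for each $y^*\in Y^*$ with $\|y^*\|\le 1$, the function $\phi_{y^*}$ is Fréchet differentiable on $X$ and its derivative $\phi_{y^*}'\colon X\to X^*$ is $L$-Lipschitz continuous. Then $F$ is Fréchet differentiable on $X$ and its derivative $F'\colon X\to\mathcal{B}(X,Y)$ is $L$-Lipschitz continuous, i.e. $\|F'(x)-F'(y)\|\le L\|x-y\|$ for all $x,y\in X$ (operator norm on the left).
   Context: $X^*$, $Y^*$ denote the continuous dual spaces with dual norms; $\mathcal{B}(X,Y)$ is the space of bounded linear operators $X\to Y$ with the operator norm $\|T\|=\sup_{\|x\|\le 1}\|T(x)\|$. *)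

(* Defs.v *)
From HB Require Import structures.
From mathcomp Require Import all_boot all_order all_algebra.
From mathcomp Require Import all_classical all_reals all_analysis.
Set Implicit Arguments. Unset Strict Implicit. Unset Printing Implicit Defensive.
Import Order.TTheory GRing.Theory Num.Theory.
Import numFieldNormedType.Exports.
Local Open Scope classical_set_scope.
Local Open Scope ring_scope.

Definition is_dual (R : realType) (E : normedModType R) (f : E -> R^o) : Prop :=
  (forall (a : R) (u v : E), f (a *: u + v) = a * f u + f v) /\ continuous f.

(* Operator norm  ||T|| = sup_{||x|| <= 1} ||T x||  (used for bounded linear T;
   for T : E -> R^o this is the dual norm). *)
Definition opnorm (R : realType) (E F : normedModType R) (T : E -> F) : R :=
  sup [set `|T x| | x in [set x : E | `|x| <= 1]].

(* Reflexivity: the canonical embedding Y -> Y^** is onto, i.e. every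
   continuous (= bounded w.r.t. the dual norm) linear functional on Y^* is an
   evaluation functional. *)
Definition reflexive_space (R : realType) (E : normedModType R) : Prop :=
  forall Phi : (E -> R^o) -> R,
    (forall (a : R) (f g : E -> R^o), is_dual f -> is_dual g ->
        Phi (fun y => a * f y + g y) = a * Phi f + Phi g) ->
    (exists C : R, forall f : E -> R^o, is_dual f -> `|Phi f| <= C * opnorm f) ->
    exists y : E, forall f : E -> R^o, is_dual f -> Phi f = f y.

(* Main.v *)
Require Import Defs.
From HB Require Import structures.
From mathcomp Require Import all_boot all_order all_algebra.
From mathcomp Require Import all_classical all_reals all_analysis.
From mathcomp Require Import ring lra.
Import Order.TTheory GRing.Theory Num.Theory.
Import numFieldNormedType.Exports.
Local Open Scope classical_set_scope.
Local Open Scope ring_scope.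
Section HBsec.
Context {R : realType} {E : normedModType R}.

Definition sublin (q : E -> R) := (forall x y, q (x + y) <= q x + q y) /\
  (forall (s : R) x, 0 < s -> q (s *: x) = s * q x).

Lemma sublin0 q : sublin q -> q 0 = 0.
Proof.
move=> [_ qZ]; have := qZ 2 0 (ltr0Sn _ 1); rewrite scaler0 => h.
have : q 0 * (2 - 1) = 0 by rewrite mulrBr mulr1 mulrC -h subrr.
by move/eqP; rewrite mulf_eq0 => /orP[/eqP//|]; rewrite (_ : 2 - 1 = 1 :> R) ?oner_eq0 //; ring.
Qed.

Lemma sublinZ q (s : R) x : sublin q -> 0 <= s -> q (s *: x) = s * q x.
Proof.
move=> hq; rewrite le_eqVlt => /orP[/eqP <-|s0]; last exact: hq.2.
by rewrite scale0r mul0r sublin0.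
Qed.

Lemma sublin_lb q x : sublin q -> (forall z, q z <= `|z|) -> - `|x| <= q x.
Proof.
move=> hq qn; have := hq.1 x (- x); rewrite subrr sublin0 // => h.
have := qn (- x); rewrite normrN => h2.
rewrite lerNl; apply: (le_trans _ h2); rewrite -lerBlDl in h.
by rewrite -sub0r.
Qed.

Lemma infQ_le (I : Type) (D : set I) (Q : I -> E -> R) i x :
  (forall i x, D i -> - `|x| <= Q i x) -> D i ->
  inf [set Q i x | i in D] <= Q i x.
Proof.
move=> lb Di; apply: ge_inf; last by exists i.
by exists (- `|x|) => _ [j Dj <-]; exact: lb.
Qed.

Lemma infQ_ge (I : Type) (D : set I) (Q : I -> E -> R) x a :
  D !=set0 -> (forall i, D i -> a <= Q i x) ->
  a <= inf [set Q i x | i in D].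
Proof.
move=> [i Di] h; apply: lb_le_inf; first by exists (Q i x), i.
by move=> _ [j Dj <-]; exact: h.
Qed.

Arguments infQ_le {I D} Q {i x}.

Lemma inf_sublin (I : Type) (D : set I) (Q : I -> E -> R) :
  D !=set0 ->
  (forall i x, D i -> - `|x| <= Q i x) ->
  (forall i j x y, D i -> D j -> exists2 k, D k & Q k (x + y) <= Q i x + Q j y) ->
  (forall (s : R) i x, 0 < s -> D i -> exists2 j, D j & Q j (s *: x) <= s * Q i x) ->
  sublin (fun x => inf [set Q i x | i in D]).
Proof.
move=> D0 lb hadd hhom.
set m := fun x => inf [set Q i x | i in D].
have homle (s : R) x : 0 < s -> m (s *: x) <= s * m x.
  move=> s0; rewrite -ler_pdivrMl //; apply: infQ_ge => // i Di.
  have [j Dj hj] := hhom s i x s0 Di.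
  rewrite ler_pdivrMl //; apply: le_trans hj; exact: infQ_le.
split.
  move=> x y.
  have h1 : forall j, D j -> m (x + y) - Q j y <= m x.
    move=> j Dj; apply: infQ_ge => // i Di.
    have [k Dk hk] := hadd i j x y Di Dj.
    rewrite lerBlDr; apply: le_trans hk; exact: infQ_le.
  have h2 : m (x + y) - m x <= m y.
    apply: infQ_ge => // j Dj; have := h1 j Dj; lra.
  lra.
move=> s x s0; apply/eqP; rewrite eq_le homle //=.
have := homle s^-1 (s *: x); rewrite invr_gt0 => /(_ s0).
rewrite scalerA mulVf ?gt_eqF // scale1r => h.
by rewrite -ler_pdivlMl.
Qed.


Definition shq (q : E -> R) (y x : E) :=
  inf [set q (x + t *: y) - t * q y | t in [set t : R | 0 <= t]].

Lemma shq_props q y : sublin q -> (forall z, q z <= `|z|) ->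
  [/\ sublin (shq q y), (forall x, shq q y x <= q x) & shq q y (- y) <= - q y].
Proof.
move=> hq qn.
set Q := fun (t : R) x => q (x + t *: y) - t * q y.
have lb : forall t x, [set t : R | 0 <= t] t -> - `|x| <= Q t x.
  move=> t x /= t0; rewrite /Q.
  have := hq.1 (x + t *: y) (- x); rewrite addrC addKr sublinZ // => h.
  have := qn (- x); rewrite normrN => h2; lra.
split.
- apply: inf_sublin => //; first by exists 0 => /=.
  + move=> t1 t2 x z /= t10 t20; exists (t1 + t2) => /=; first exact: addr_ge0.
    rewrite /Q scalerDl.
    have -> : x + z + (t1 *: y + t2 *: y) = (x + t1 *: y) + (z + t2 *: y).
      by rewrite addrACA.
    have := hq.1 (x + t1 *: y) (z + t2 *: y); lra.
  + move=> s t x s0 /= t0; exists (s * t) => /=; first exact: mulr_ge0 (ltW s0) t0.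
    rewrite /Q -scalerA -scalerDr hq.2 //; lra.
- move=> x; apply: le_trans (infQ_le Q lb _) _ => /=.
    exact: (lexx 0).
  by rewrite /Q scale0r addr0 mul0r subr0.
- apply: le_trans (infQ_le Q lb _) _ => /=.
    exact: (ler01).
  by rewrite /Q scale1r addNr sublin0 // mul1r sub0r.
Qed.

Lemma sublin_norm : sublin (fun x : E => `|x|).
Proof.
split; first exact: ler_normD.
by move=> s x s0; rewrite normrZ gtr0_norm.
Qed.

Lemma norming (y0 : E) : exists f : E -> R,
  [/\ (forall (a : R) u v, f (a *: u + v) = a * f u + f v),
      (forall x, `|f x| <= `|x|) & f y0 = `|y0|].
Proof.
pose P (q : E -> R) := [/\ sublin q, (forall x, q x <= `|x|) & q (- y0) <= - `|y0|].
pose T := {q : E -> R | P q}.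
have [s0 s0n s0y] := shq_props (fun x : E => `|x|) y0 sublin_norm (fun z => lexx _).
have P0 : P (shq (fun x => `|x|) y0) by split => //; apply: le_trans s0y _; rewrite normrN.
pose t0 : T := exist _ _ P0.
pose Rr (a b : T) := `[< forall x, sval b x <= sval a x >].
have [q qmax] : exists q, premaximal Rr q.
  apply: (ZL_preorder t0).
  - by move=> t; apply/asboolP => x.
  - move=> a b c /asboolP hab /asboolP hbc; apply/asboolP => x.
    exact: le_trans (hbc x) (hab x).
  - move=> A Atot.
    have [[a0 Aa0]|A0] := pselect (A !=set0); last first.
      by exists t0 => s As; exfalso; apply: A0; exists s.
    set m := fun x => inf [set sval a x | a in A].
    have lbA : forall (a : T) x, A a -> - `|x| <= sval a x.
      move=> [a [ha1 ha2 ha3]] x _ /=; exact: sublin_lb.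
    have Pm : P m.
      split.
      + apply: inf_sublin; first by exists a0.
        * exact: lbA.
        * move=> i j x y Ai Aj; have [/asboolP hij|/asboolP hji] := Atot _ _ Ai Aj.
          - exists j => //; have [[hj _] _ _] := svalP j.
            apply: le_trans (hj x y) _; rewrite lerD2r; exact: hij.
          - exists i => //; have [[hi _] _ _] := svalP i.
            apply: le_trans (hi x y) _; rewrite lerD2l; exact: hji.
        * move=> s i x s1 Ai; exists i => //; have [[_ hi] _ _] := svalP i.
          by rewrite hi.
      + move=> x; apply: le_trans (infQ_le (fun a : T => sval a) lbA Aa0) _.
        by have [_ h _] := svalP a0.
      + apply: le_trans (infQ_le (fun a : T => sval a) lbA Aa0) _.
        by have [_ _ h] := svalP a0.
    exists (exist _ m Pm) => s As; apply/asboolP => x /=.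
    exact: (infQ_le (fun a : T => sval a) lbA As).
  move: q qmax => [q [qs qn qy]] qmax.
  have qneg : forall y, q (- y) = - q y.
    move=> y; have [s1 s2 s3] := shq_props q y qs qn.
    have Psh : P (shq q y).
      by split => // [x|]; [exact: le_trans (s2 x) (qn x)|exact: le_trans (s2 _) qy].
    have /qmax /asboolP /= h : Rr (exist _ q (And3 qs qn qy)) (exist _ _ Psh).
      by apply/asboolP => x /=.
    apply/eqP; rewrite eq_le (le_trans (h _) s3) /=.
    have := qs.1 y (- y); rewrite subrr sublin0 //; lra.
  have qadd : forall x y, q (x + y) = q x + q y.
    move=> x y; apply/eqP; rewrite eq_le qs.1 /=.
    have := qs.1 (x + y) (- y); rewrite addrK qneg; lra.
  exists q; split.
  - move=> a u v; rewrite qadd; congr (_ + _).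
    have [a0|a0] := leP 0 a; first exact: sublinZ.
    rewrite -[a]opprK scaleNr qneg sublinZ ?oppr_ge0 ?ltW //; lra.
  - by move=> x; rewrite ler_norml qn andbT lerNl -qneg -(normrN x) qn.
  - apply/eqP; rewrite eq_le qn /=.
    by rewrite -[q y0]opprK -qneg lerNr.
Qed.

End HBsec.

Section Tay.
Context {R : realType}.

Lemma taylor (E : normedModType R) (phi : E -> R^o) (K : R) :
  0 <= K ->
  (forall x, differentiable phi x) ->
  (forall x z h, `|'d phi x h - 'd phi z h| <= K * `|x - z| * `|h|) ->
  forall x h, `|phi (x + h) - phi x - 'd phi x h| <= K * `|h| ^+ 2.
Proof.
move=> K0 dphi lip x h.
set c := 'd phi x h.
pose gam : R -> E := (fun s : R => s *: h) + cst x.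
pose g : R -> R^o := (phi \o gam) - ( *:%R^~ (c : R^o)).
have hd : forall t : R, is_diff t g (('d phi (gam t)) \o ((fun s : R => s *: h) + 0) - ( *:%R^~ (c : R^o))).
  move=> t; apply: is_diffB.
  apply: is_diff_comp; last exact: differentiableP.
have gdiff : forall t : R, differentiable g t by move=> t; case: (hd t).
have gd : forall t : R, is_derive t 1 g ('d phi (t *: h + x) h - c).
  move=> t; have hdt := hd t.
  apply: DeriveDef; first exact: diff_derivable.
  rewrite deriveE // diff_val.
  transitivity ('d phi (t *: h + x) (1 *: h + 0) - (1 : R) *: (c : R^o)); first by [].
  by rewrite scale1r addr0 scale1r.
have [t0 t0in eq] := @MVT_segment R g (fun t => 'd phi (t *: h + x) h - c) 0 1 ler01 (fun t _ => gd t)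
  (continuous_subspaceT (fun t => differentiable_continuous (gdiff t))).
have e1 : g 1 - g 0 = (phi (1 *: h + x) - (1:R) *: (c:R^o)) - (phi (0 *: h + x) - (0:R) *: (c : R^o)) by [].
rewrite e1 scale1r scale0r add0r scale0r subr0 addrC subr0 mulr1 in eq.
have -> : phi (x + h) - phi x - c = 'd phi (t0 *: h + x) h - 'd phi x h.
  by rewrite -eq scale1r (addrC h x) addrCA addrA.
apply: le_trans (lip _ _ _) _.
rewrite addrK normrZ expr2 mulrA.
have ht : `|t0| <= 1.
  by move: t0in; rewrite in_itv /= => /andP[a b]; rewrite ger0_norm.
have hh : 0 <= `|h| := normr_ge0 h.
have : K * (`|t0| * `|h|) <= K * (1 * `|h|) by apply: ler_wpM2l => //; apply: ler_wpM2r.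
rewrite mul1r mulrA => H; rewrite mulrA; have := ler_wpM2r hh H; move=> /= H2; exact: H2.
Qed.
End Tay.

Set Implicit Arguments. Unset Strict Implicit.
Section Main1.
Context {R : realType}.

Definition mklin (V W : normedModType R) (f : V -> W)
  (Hf : forall a u v, f (a *: u + v) = a *: f u + f v) : {linear V -> W} :=
  HB.pack_for {linear V -> W} f (GRing.isLinear.Build R V W *:%R f Hf).

Lemma dual0 (E : normedModType R) (f : E -> R^o) : is_dual f -> f 0 = 0.
Proof.
move=> [lf _]; have := lf 1 0 0; rewrite scale1r addr0 mul1r => h.
by rewrite -[LHS](addrK (f 0)) -h subrr.
Qed.

Lemma dualZ (E : normedModType R) (f : E -> R^o) a u : is_dual f -> f (a *: u) = a * f u.
Proof. by move=> df; have := df.1 a u 0; rewrite addr0 (dual0 df) // addr0. Qed.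

Lemma dual_bound (E : normedModType R) (f : E -> R^o) : is_dual f ->
  exists2 M, 0 < M & forall y, `|f y| <= M * `|y|.
Proof.
move=> df.
have Hf : forall a u v, f (a *: u + v) = a *: f u + f v by move=> a u v; rewrite df.1.
have := @linear_lipschitz R E R^o (@mklin E R^o f Hf) df.2.
by move=> [k k0 hk]; exists k.
Qed.

Lemma opnorm_le (E W : normedModType R) (f : E -> W) (c : R) : 0 <= c ->
  (forall y, `|f y| <= c * `|y|) -> opnorm f <= c.
Proof.
move=> c0 hf; apply: ge_sup; first by exists `|f 0|, 0 => //=; rewrite normr0.
move=> _ [x /= x1 <-]; apply: le_trans (hf x) _.
by rewrite -[leRHS]mulr1 ler_wpM2l.
Qed.

Lemma opnorm_ge (E W : normedModType R) (f : E -> W) (M : R) :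
  (forall y, `|f y| <= M * `|y|) -> (forall (a : R) u, f (a *: u) = a *: f u) ->
  forall y, `|f y| <= opnorm f * `|y|.
Proof.
move=> hM hZ y.
have ub : forall x, `|x| <= 1 -> `|f x| <= opnorm f.
  move=> x x1; apply: ub_le_sup; last by exists x.
  exists (Num.max M 0) => _ [z /= z1 <-]; apply: le_trans (hM z) _.
  apply: le_trans (_ : Num.max M 0 * `|z| <= _).
    by apply: ler_wpM2r => //; rewrite le_max lexx.
  by rewrite -[leRHS]mulr1 ler_wpM2l // le_max lexx orbT.
have [->|y0] := eqVneq y 0.
  have := hZ 0 0; rewrite !scale0r => ->; rewrite !normr0 mulr0 //.
have ny : 0 < `|y| by rewrite normr_gt0.
have := ub (`|y|^-1 *: y); rewrite normrZ normrV ?unitfE ?normr_eq0 // normr_id mulVf ?gt_eqF //.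
rewrite lexx hZ normrZ normrV ?unitfE ?normr_eq0 // normr_id => /(_ isT).
by rewrite ler_pdivrMl // mulrC.
Qed.

Lemma dual_opnorm1 (E : normedModType R) (f : E -> R^o) : is_dual f ->
  opnorm f <= 1 <-> forall y, `|f y| <= `|y|.
Proof.
move=> df; split.
  move=> h1 y; have [M _ hM] := @dual_bound E f df.
  apply: le_trans (@opnorm_ge E R^o f M hM (fun a u => @dualZ E f a u df) y) _.
  by rewrite -[leRHS]mul1r ler_wpM2r.
by move=> h; apply: opnorm_le => // y; rewrite mul1r.
Qed.

End Main1.

Set Implicit Arguments. Unset Strict Implicit.
Lemma norming_dual {R : realType} (E : normedModType R) (y0 : E) :
  exists f : E -> R^o, [/\ is_dual f, (forall x, `|f x| <= `|x|) & f y0 = `|y0|].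
Proof.
have [f [fl fb fy]] := norming y0.
have Hf : forall a u v, (f : E -> R^o) (a *: u + v) = a *: f u + f v by move=> a u v; rewrite fl.
exists f; split => //; split => //.
apply: (@bounded_linear_continuous _ _ _ (mklin Hf)).
apply/ex_bound; exists 1; apply/nbhs_norm0P; exists 1 => //= y /= y1.
by apply: le_trans (fb y) _; apply: ltW.
Qed.

Lemma dual_sep {R : realType} (E : normedModType R) (v w : E) :
  (forall f : E -> R^o, is_dual f -> (forall y, `|f y| <= `|y|) -> f v = f w) -> v = w.
Proof.
move=> h; have [f [df fb fy]] := norming_dual (v - w).
have := df.1 (-1) w v; rewrite scaleN1r addrC fy h // mulN1r addNr.
by move/normr0_eq0/eqP; rewrite subr_eq0 => /eqP.
Qed.

Section Main2.
Context {R : realType} {X Y : completeNormedModType R} (F : X -> Y) (L : R).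
Hypothesis Fc : continuous F.
Hypothesis L0 : 0 < L.
Hypothesis HF : forall ys : Y -> R^o, is_dual ys -> opnorm ys <= 1 ->
     (forall x : X, differentiable (ys \o F) x) /\
     (forall x z : X,
        opnorm (fun h : X => ('d (ys \o F) x : X -> R^o) h - ('d (ys \o F) z : X -> R^o) h)
          <= L * `|x - z|).

Lemma diffZ' (V W : normedModType R) (f : V -> W) (k : R) (g : V -> W) x :
  differentiable f x -> (forall y, g y = k *: f y) -> 'd g x = k \*: 'd f x :> (V -> W).
Proof.
move=> df hg; have -> : g = k *: f by apply/funext => y; rewrite hg.
exact: diffZ.
Qed.

Lemma dscale (f : Y -> R^o) (M : R) : is_dual f -> 0 < M ->
  (forall y, `|f y| <= M * `|y|) ->
  (forall x, differentiable (f \o F) x) /\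
  (forall x z h, `|('d (f \o F) x : X -> R^o) h - ('d (f \o F) z : X -> R^o) h|
      <= M * L * `|x - z| * `|h|).
Proof.
move=> df M0 hM.
pose g : Y -> R^o := fun y => M^-1 * f y.
have dg : is_dual g.
  split; first by move=> a u v; rewrite /g df.1 mulrDr mulrCA.
  move=> y; rewrite /continuous_at /g; apply: cvgMr; exact: df.2.
have g1 : opnorm g <= 1.
  apply/(dual_opnorm1 dg) => y; rewrite /g normrM normfV (gtr0_norm M0).
  by rewrite ler_pdivrMl.
have [gd gl] := HF dg g1.
have fgE : f \o F = M *: (g \o F).
  apply/funext => x; change (f (F x) = M * (M^-1 * f (F x))).
  by rewrite mulrA mulfV ?gt_eqF // mul1r.
have fd : forall x, differentiable (f \o F) x.
  by move=> x; rewrite fgE; apply: differentiableZ.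
split => // x z h.
have dfE : forall w, 'd (f \o F) w = M \*: 'd (g \o F) w :> (X -> R^o).
  move=> w; apply: diffZ' (gd w) _ => y.
  change (f (F y) = M * (M^-1 * f (F y))).
  by rewrite mulrA mulfV ?gt_eqF // mul1r.
rewrite !dfE /= -scalerBr normrZ gtr0_norm // -!mulrA ler_pM2l // mulrA.
set dd := fun h => ('d (g \o F) x : X -> R^o) h - ('d (g \o F) z : X -> R^o) h.
have [k1 k10 hk1] := linear_lipschitz (diff_continuous (gd x)).
have [k2 k20 hk2] := linear_lipschitz (diff_continuous (gd z)).
have hb : forall y, `|dd y| <= (k1 + k2) * `|y|.
  move=> y; rewrite /dd mulrDl; apply: le_trans (ler_normB _ _) _.
  exact: lerD.
have hZ : forall (a : R) u, dd (a *: u) = a *: dd u.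
  by move=> a u; rewrite /dd !linearZ /= scalerDr.
apply: le_trans (opnorm_ge hb hZ h) _.
by apply: ler_wpM2r => //; exact: gl.
Qed.


Lemma opnorm_ge0 (E W : normedModType R) (f : E -> W) (M : R) :
  (forall y, `|f y| <= M * `|y|) -> 0 <= opnorm f.
Proof.
move=> hM; have h0 : `|f 0| = 0.
  by apply/eqP; rewrite eq_le normr_ge0 andbT; have := hM 0; rewrite normr0 mulr0.
rewrite -h0; apply: ub_le_sup; last by exists 0 => //=; rewrite normr0.
exists (Num.max M 0) => _ [z /= z1 <-]; apply: le_trans (hM z) _.
apply: le_trans (_ : Num.max M 0 * `|z| <= _).
  by apply: ler_wpM2r => //; rewrite le_max lexx.
by rewrite -[leRHS]mulr1 ler_wpM2l // le_max lexx orbT.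
Qed.

Lemma dual_diff (f : Y -> R^o) : is_dual f -> forall x, differentiable (f \o F) x.
Proof. by move=> df; have [M M0 hM] := dual_bound df; case: (dscale df M0 hM). Qed.

Lemma taylorF (f : Y -> R^o) (M : R) : is_dual f -> 0 < M ->
  (forall y, `|f y| <= M * `|y|) ->
  forall x h, `|f (F (x + h)) - f (F x) - ('d (f \o F) x : X -> R^o) h| <= M * L * `|h| ^+ 2.
Proof.
move=> df M0 hM x h; have [d1 d2] := dscale df M0 hM.
have := @taylor R X (f \o F) (M * L) _ d1 _ x h; apply.
  by apply: mulr_ge0; apply: ltW.
by move=> *; apply: d2.
Qed.


Lemma Phi_bound x h (f : Y -> R^o) : is_dual f ->
  `|('d (f \o F) x : X -> R^o) h| <= (`|F (x + h) - F x| + L * `|h| ^+ 2) * opnorm f.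
Proof.
move=> df; have [M M0 hM] := dual_bound df.
have hb := opnorm_ge hM (fun a u => dualZ a u df).
have p0 := opnorm_ge0 hM.
have [pp|pn] := ltP 0 (opnorm f).
  have := taylorF df pp hb x h => ht.
  have e : ('d (f \o F) x : X -> R^o) h = (f (F (x + h)) - f (F x)) - (f (F (x + h)) - f (F x) - ('d (f \o F) x : X -> R^o) h).
    by rewrite opprB addrC subrK.
  rewrite e; apply: le_trans (ler_normB _ _) _.
  rewrite mulrDl; apply: lerD; last by rewrite mulrC mulrA.
  have -> : f (F (x + h)) - f (F x) = f (F (x + h) - F x).
    by have := df.1 (-1) (F x) (F (x + h)); rewrite scaleN1r mulN1r addrC => ->; rewrite addrC.
  by rewrite mulrC; apply: hb.
have p00 : opnorm f = 0 by apply/eqP; rewrite eq_le pn p0.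
have f0 : f \o F = cst 0.
  apply/funext => y /=; apply/normr0_eq0/eqP; rewrite eq_le normr_ge0 andbT.
  by have := hb (F y); rewrite p00 mul0r.
rewrite f0 diff_cst p00 mulr0 /=; by rewrite normr0.
Qed.

Lemma diffDZ' (V W : normedModType R) (f g u : V -> W) (k : R) x :
  differentiable f x -> differentiable g x -> (forall y, u y = k *: f y + g y) ->
  'd u x = (fun h => k *: 'd f x h + 'd g x h) :> (V -> W).
Proof.
move=> df dg hu; have -> : u = k *: f + g by apply/funext => y; rewrite hu.
rewrite diffD ?diffZ //; exact: differentiableZ.
Qed.

Lemma Phi_lin x h (a : R) (f g : Y -> R^o) : is_dual f -> is_dual g ->
  ('d ((fun y => a * f y + g y) \o F) x : X -> R^o) h =
  a * ('d (f \o F) x : X -> R^o) h + ('d (g \o F) x : X -> R^o) h.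
Proof.
move=> df dg.
by rewrite (@diffDZ' X R^o (f \o F) (g \o F) _ a x (dual_diff df x) (dual_diff dg x)).
Qed.


Hypothesis Yr : reflexive_space Y.

Lemma Dex : exists D : X -> X -> Y, forall x h (f : Y -> R^o), is_dual f ->
  ('d (f \o F) x : X -> R^o) h = f (D x h).
Proof.
have : forall x : X, exists Dx : X -> Y, forall h (f : Y -> R^o), is_dual f ->
    ('d (f \o F) x : X -> R^o) h = f (Dx h).
  move=> x.
  have : forall h : X, exists v : Y, forall f : Y -> R^o, is_dual f ->
      ('d (f \o F) x : X -> R^o) h = f v.
    move=> h.
    apply: (@Yr (fun f : Y -> R^o => ('d (f \o F) x : X -> R^o) h)).
      by move=> a f g df dg; apply: Phi_lin.
    by exists (`|F (x + h) - F x| + L * `|h| ^+ 2) => f df; apply: Phi_bound.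
  by move/choice => [Dx HDx]; exists Dx.
by move/choice => [D HD]; exists D.
Qed.


Lemma dualB (E : normedModType R) (f : E -> R^o) (a b : E) : is_dual f -> f (a - b) = f a - f b.
Proof.
by move=> df; have := df.1 (-1) b a; rewrite scaleN1r mulN1r addrC => ->; rewrite addrC.
Qed.

Lemma dualD (E : normedModType R) (f : E -> R^o) (a b : E) : is_dual f -> f (a + b) = f a + f b.
Proof. by move=> df; have := df.1 1 a b; rewrite scale1r mul1r. Qed.

Lemma main_res : (forall x, differentiable F x) /\ (forall x z : X,
     opnorm (fun h : X => ('d F x : X -> Y) h - ('d F z : X -> Y) h) <= L * `|x - z|).
Proof.
have [D HD] := Dex.
have Dlin : forall x (a : R) u v, D x (a *: u + v) = a *: D x u + D x v.
  move=> x a u v; apply: dual_sep => f df _.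
  rewrite -HD // df.1 -!HD // linearP.
  by [].
have fb1 : forall f : Y -> R^o, (forall y, `|f y| <= `|y|) -> forall y, `|f y| <= 1 * `|y|.
  by move=> f fb y; rewrite mul1r.
have tay1 : forall f : Y -> R^o, is_dual f -> (forall y, `|f y| <= `|y|) ->
    forall x h, `|f (F (x + h)) - f (F x) - f (D x h)| <= L * `|h| ^+ 2.
  move=> f df fb x h; rewrite -HD //.
  by have := taylorF df ltr01 (fb1 f fb) x h; rewrite mul1r.
have Dcont : forall x, continuous (mklin (Dlin x)).
  move=> x; apply: bounded_linear_continuous; apply/ex_bound; exists (1 + L).
  have h1 : \forall z \near x, `|F x - F z| <= 1.
    by apply: cvgr_dist_le; [exact: Fc|exact: ltr01].
  move/nbhs0P: h1 => h1.
  have h2 : \forall e \near (0:X), `|e| < 1.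
    by apply/nbhs_norm0P; exists 1 => //=; exact: ltr01.
  apply: filterS2 h1 h2 => u hu1 hu2 /=.
  have [f [df fb fy]] := norming_dual (D x u).
  change (`|D x u| <= 1 + L); rewrite -fy.
  have e : f (D x u) = f (F (x + u) - F x) - (f (F (x + u)) - f (F x) - f (D x u)).
    by rewrite dualB // opprB addrC subrK.
  rewrite e; apply: le_trans (ler_norm _) _.
  apply: le_trans (ler_normB _ _) _; apply: lerD.
    by apply: le_trans (fb _) _; rewrite distrC.
  apply: le_trans (tay1 f df fb x u) _.
  rewrite -[leRHS]mulr1 ler_wpM2l ?ltW //.
  by rewrite expr2; have := normr_ge0 u; nra.
have Hlo : forall x, F \o shift x = cst (F x) + mklin (Dlin x) +o_ 0 id.
  move=> x; apply/eqaddoP => eps eps0.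
  apply/nbhs_norm0P; exists (eps / L) => /=; first by rewrite divr_gt0.
  move=> u hu.
  change (`|F (u + x) - (F x + D x u)| <= eps * `|u|).
  have [f [df fb fy]] := norming_dual (F (u + x) - (F x + D x u)).
  rewrite -fy !dualB // dualD // opprD addrA (addrC u x).
  apply: le_trans (ler_norm _) _; apply: le_trans (tay1 f df fb x u) _.
  rewrite expr2 mulrA ler_wpM2r //.
  by rewrite mulrC -ler_pdivlMr // ltW.
have diffF : forall x, differentiable F x /\ 'd F x = D x :> (X -> Y).
  move=> x; have e := diff_unique (Dcont x) (Hlo x).
  split; last by rewrite e.
  apply/diff_locallyP; rewrite e; split; [exact: Dcont | exact: Hlo].
split; first by move=> x; case: (diffF x).
move=> x z; rewrite (diffF x).2 (diffF z).2.
apply: opnorm_le; first by apply: mulr_ge0; [exact: ltW|exact: normr_ge0].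
move=> h; have [f [df fb fy]] := norming_dual (D x h - D z h); rewrite -fy.
rewrite dualB // -!HD //; apply: le_trans (ler_norm _) _.
have [_ d2] := dscale df ltr01 (fb1 f fb).
by apply: le_trans (d2 x z h) _; rewrite mul1r.
Qed.

End Main2.


Theorem lemma2p3 (R : realType) (X Y : completeNormedModType R)
  (F : X -> Y) (L : R) :
  reflexive_space Y ->
  continuous F ->
  0 < L ->
  (forall ys : Y -> R^o, is_dual ys -> opnorm ys <= 1 ->
     (forall x : X, differentiable (ys \o F) x) /\
     (forall x z : X,
        opnorm (fun h : X => ('d (ys \o F) x : X -> R^o) h - ('d (ys \o F) z : X -> R^o) h)
          <= L * `|x - z|)) ->
  (forall x : X, differentiable F x) /\
  (forall x z : X,
     opnorm (fun h : X => ('d F x : X -> Y) h - ('d F z : X -> Y) h) <= L * `|x - z|).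
Proof.
move=> Yr Fc L0 HF.
exact: (@main_res R X Y F L Fc L0 HF Yr).
Qed.
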